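(* Let $d>7$ be a positive integer with $\gcd(d,105)=1$, and let $n$ be a positive integer. Then the number of primes in the set $\{d+1,\,2d+1,\,3d+1,\,\ldots,\,nd+1\}$ is at most $0.46n+7$. *)

(* Defs.v *)
From mathcomp Require Import all_boot all_order all_algebra.

(* Main.v *)
Require Import Defs.
From mathcomp Require Import all_boot all_order all_algebra.
From mathcomp Require Import lra zify.
Import GRing.Theory Num.Theory.

Definition gg (a b c k : nat) : bool :=
  [&& ((k %% 3) * a + 1) %% 3 != 0, ((k %% 5) * b + 1) %% 5 != 0
    & ((k %% 7) * c + 1) %% 7 != 0]%N.

Definition finchk (a b c : nat) : bool :=
  (count (gg a b c) (iota 1 105) == 48)%N &&
  all (fun r => 100 * count (gg a b c) (iota 1 r) <= 46 * r + 700)%N (iota 0 105).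

Lemma finchk_all :
  all (fun a => all (fun b => all (fun c => finchk a b c) (iota 1 6)) (iota 1 4)) (iota 1 2).
Proof. vm_compute. reflexivity. Qed.

Lemma gg_per a b c q x : gg a b c (105 * q + x) = gg a b c x.
Proof.
rewrite /gg.
have -> : (105 * q + x) %% 3 = x %% 3 by rewrite [105 * q](_ : _ = 35 * q * 3) ?modnMDl // mulnAC.
have -> : (105 * q + x) %% 5 = x %% 5 by rewrite [105 * q](_ : _ = 21 * q * 5) ?modnMDl // mulnAC.
have -> : (105 * q + x) %% 7 = x %% 7 by rewrite [105 * q](_ : _ = 15 * q * 7) ?modnMDl // mulnAC.
by [].
Qed.

Lemma gg_shift a b c q m r :
  count (gg a b c) (iota (105 * q + m) r) = count (gg a b c) (iota m r).
Proof.
rewrite iotaDl count_map; apply: eq_count => x /=; exact: gg_per.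
Qed.

Lemma gg_full a b c q : count (gg a b c) (iota 1 105) = 48%N ->
  count (gg a b c) (iota 1 (105 * q)) = (48 * q)%N.
Proof.
move=> H; elim: q => [|q IH]; first by rewrite muln0.
by rewrite mulnS addnC iotaD count_cat IH (addnC 1) gg_shift H mulnS addnC.
Qed.

Lemma clause p k d : prime p -> prime (k*d).+1 -> (p < (k*d).+1)%N ->
  (((k %% p) * (d %% p) + 1) %% p != 0)%N.
Proof.
move=> pp pr lt; apply/negP => /eqP h.
rewrite -modnDml modnMml modnMmr modnDml addn1 in h.
have : (p %| (k*d).+1)%N by rewrite /dvdn h.
rewrite dvdn_prime2 // => /eqP e; by rewrite e ltnn in lt.
Qed.

Local Open Scope ring_scope.

Theorem lemma5p2 (d n : nat) (hd : (7 < d)%N) (hg : gcdn d 105 = 1%N)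
  (hn : (0 < n)%N) :
  ((count (fun k => prime (k * d).+1) (iota 1 n))%:R : rat)
    <= (46 / 100) * n%:R + 7.
Proof.
have nz : forall p, (1 < p)%N -> (p %| 105)%N -> (0 < d %% p)%N.
  move=> p p1 hp; rewrite lt0n; apply/negP => /eqP h0.
  have : (p %| gcdn d 105)%N by rewrite dvdn_gcd hp andbT /dvdn h0.
  by rewrite hg dvdn1 => /eqP e; rewrite e in p1.
have hsub : (count (fun k => prime (k * d).+1) (iota 1 n)
             <= count (gg (d %% 3) (d %% 5) (d %% 7)) (iota 1 n))%N.
  apply: sub_count => k /= pr.
  case: k pr => [|k] pr; first by [].
  have big : (7 < (k.+1 * d).+1)%N.
    by apply: (ltn_trans hd); rewrite ltnS mulSn leq_addr.
  rewrite /gg !clause //; exact: leq_ltn_trans _ big.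
have ha : (d %% 3 \in iota 1 2)%N by rewrite mem_iota nz // ltn_mod.
have hb : (d %% 5 \in iota 1 4)%N by rewrite mem_iota nz // ltn_mod.
have hc : (d %% 7 \in iota 1 6)%N by rewrite mem_iota nz // ltn_mod.
have hf := finchk_all.
move/allP: hf => /(_ _ ha) /allP /(_ _ hb) /allP /(_ _ hc) /andP [/eqP h48 /allP hr].
set g := gg _ _ _ in hsub h48 hr.
have hr' := hr (n %% 105)%N; rewrite mem_iota /= ltn_mod in hr'.
have hr'' := hr' isT.
have en : n = (105 * (n %/ 105) + n %% 105)%N by rewrite mulnC -divn_eq.
have hcnt : count g (iota 1 n) = (48 * (n %/ 105) + count g (iota 1 (n %% 105)))%N.
  rewrite {1}en iotaD count_cat gg_full // (addnC 1) gg_shift //.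
have hn' : (100 * count (fun k => prime (k * d).+1) (iota 1 n) <= 46 * n + 700)%N.
  apply: (leq_trans (leq_mul (leqnn 100) hsub)).
  rewrite hcnt.
  move: hr'' en; set q := (n %/ 105)%N; set r := (n %% 105)%N; set c := count g _.
  lia.
have : ((100 * count (fun k => prime (k * d).+1) (iota 1 n))%:R <= (46 * n + 700)%N%:R :> rat).
  by rewrite ler_nat.
rewrite natrM natrD natrM => H.
lra.
Qed.
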